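(* Let $p$ be a prime, $X$ a countable set, and let $A\in\mathcal{B}(\mathbb{Q}_p(X))$ be a normal contraction. Then there is a contractive homomorphism of $\mathbb{Z}_p$-algebras $\pi_A: C(\mathbb{Z}_p,\mathbb{Z}_p)\to\mathcal{B}(\mathbb{Q}_p(X))$ with $\pi_A(\mathrm{id}_{\mathbb{Z}_p})=A$, where $C(\mathbb{Z}_p,\mathbb{Z}_p)$ carries the supremum norm.
   Context: $\mathbb{Q}_p(X)$ is the set of maps $\xi:X\to\mathbb{Q}_p$ with $|\xi(i)|_p\le1$ for all but finitely many $i$, a $\mathbb{Z}_p$-module under coordinatewise operations, with the topology $\tau$ in which $A\subseteq\mathbb{Q}_p(X)$ is open iff for every finite $P\subseteq X$ the set $A\cap\big(\prod_{i\in P}\mathbb{Q}_p\times\prod_{j\in X\setminus P}\mathbb{Z}_p\big)$ is open in the product topology. $\mathcal{B}(\mathbb{Q}_p(X))$ is the $\mathbb{Z}_p$-algebra of $\tau$-continuous $\mathbb{Z}_p$-linear maps on $\mathbb{Q}_p(X)$ with operator norm $\|T\|=\sup_{\|\xi\|\le1}\|T\xi\|$, $\|\xi\|=\max_i|\xi(i)|_p$. An operator $A\in\mathcal{B}(\mathbb{Q}_p(X))$ is a normal contraction if for every $n\in\mathbb{N}$ the quotient $\binom{A}{n}:=\frac{A(A-1)\cdots(A-(n-1))}{n!}$ is defined as an element of $\mathcal{B}(\mathbb{Q}_p(X))$ (i.e. there is an operator $B$ in $\mathcal{B}(\mathbb{Q}_p(X))$ with $n!\,B=A(A-1)\cdots(A-(n-1))$)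 and satisfies $\|\binom{A}{n}\|\le1$. $C(\mathbb{Z}_p,\mathbb{Z}_p)$ is the $\mathbb{Z}_p$-algebra of continuous functions $\mathbb{Z}_p\to\mathbb{Z}_p$; contractive means $\|\pi_A(f)\|\le\|f\|_{\sup}$. *)

(* Defs.v *)
From HB Require Import structures.
From mathcomp Require Import all_boot all_order all_algebra.
From mathcomp Require Import reals.
Set Implicit Arguments. Unset Strict Implicit. Unset Printing Implicit Defensive.
Import Order.TTheory GRing.Theory Num.Theory.
Local Open Scope ring_scope.

(* The field Q_p, given by its characterizing properties:             *)
(* K is complete. This determines (K, v) up to isometric isomorphism  *)
(* as (Q_p, |.|_p).                                                   *)
Record is_Qp (R : realType) (p : nat) (K : fieldType) (v : K -> R) : Prop := {
  Qp_ge0 : forall x, 0 <= v x;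
  Qp_eq0 : forall x, v x = 0 <-> x = 0;
  Qp_mul : forall x y, v (x * y) = v x * v y;
  Qp_ultra : forall x y, v (x + y) <= Num.max (v x) (v y);
  Qp_vp : v (p%:R) = (p%:R)^-1;
  Qp_vunit : forall n : nat, coprime n p -> v (n%:R) = 1;
  Qp_dense : forall (x : K) (e : R), 0 < e -> exists q : rat, v (x - ratr q) < e;
  Qp_complete : forall u : nat -> K,
    (forall e : R, 0 < e -> exists N : nat, forall m n : nat,
        (N <= m)%N -> (N <= n)%N -> v (u m - u n) < e) ->
    exists l : K, forall e : R, 0 < e -> exists N : nat, forall n : nat,
        (N <= n)%N -> v (u n - l) < e
}.

Section Defs.
Variables (R : realType) (K : fieldType) (v : K -> R) (X : countType).

Definition Zp_elem (a : K) : Prop := v a <= 1.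

Definition inQpX (xi : X -> K) : Prop :=
  exists s : seq X, forall i, 1 < v (xi i) -> i \in s.

Definition inEP (P : seq X) (xi : X -> K) : Prop :=
  forall j, j \notin P -> v (xi j) <= 1.

Definition open_EP (P : seq X) (U : (X -> K) -> Prop) : Prop :=
  forall xi, U xi -> exists (F : seq X) (e : R), 0 < e /\
    forall eta, inEP P eta -> (forall i, i \in F -> v (eta i - xi i) < e) -> U eta.

Definition tau_open (A : (X -> K) -> Prop) : Prop :=
  (forall xi, A xi -> inQpX xi) /\
  forall P : seq X, open_EP P (fun xi => A xi /\ inEP P xi).

(* operators are represented by functions (X -> K) -> (X -> K);
   only their values on Q_p(X) matter *)
Definition Op := (X -> K) -> (X -> K).

Definition eqOp (S T : Op) : Prop := forall xi, inQpX xi -> S xi = T xi.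

Definition isBop (T : Op) : Prop :=
  [/\ forall xi, inQpX xi -> inQpX (T xi),
      forall xi eta, inQpX xi -> inQpX eta ->
        T (fun i => xi i + eta i) = (fun i => T xi i + T eta i),
      forall (a : K) xi, Zp_elem a -> inQpX xi ->
        T (fun i => a * xi i) = (fun i => a * T xi i) &
      forall U, tau_open U -> tau_open (fun xi => inQpX xi /\ U (T xi))].

Definition opnorm_le (T : Op) (c : R) : Prop :=
  forall xi, inQpX xi -> (forall i, v (xi i) <= 1) -> forall i, v (T xi i) <= c.

Fixpoint falling (A : Op) (n : nat) : Op :=
  match n with
  | 0 => fun xi => xi
  | m.+1 => fun xi => let eta := falling A m xi in
                      fun i => A eta i - m%:R * eta i
  end.

Definition normal_contraction (A : Op) : Prop :=
  forall n : nat, exists B : Op,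
    [/\ isBop B, eqOp (fun xi i => n`!%:R * B xi i) (falling A n) & opnorm_le B 1].

(* C(Z_p, Z_p): functions K -> K mapping Z_p into Z_p, continuous on Z_p
   (only their restriction to Z_p matters) *)
Definition CZpZp (f : K -> K) : Prop :=
  (forall x, Zp_elem x -> Zp_elem (f x)) /\
  forall x, Zp_elem x -> forall e : R, 0 < e -> exists d : R, 0 < d /\
    forall y, Zp_elem y -> v (y - x) < d -> v (f y - f x) < e.

End Defs.

(* Main.v *)
Require Import Defs.
From HB Require Import structures.
From mathcomp Require Import all_boot all_order all_algebra.
From mathcomp Require Import reals.
From mathcomp Require Import ring lra zify.
From Stdlib Require Import ClassicalEpsilon FunctionalExtensionality.
Import Order.TTheory GRing.Theory Num.Theory.
Local Open Scope ring_scope.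
Set Implicit Arguments. Unset Strict Implicit. Unset Printing Implicit Defensive.

Section Main.
Variables (R : realType) (p : nat) (K : fieldType) (v : K -> R).
Hypothesis HK : is_Qp p v.
Hypothesis pr_p : prime p.

Lemma v_ge0 x : 0 <= v x. Proof. exact: Qp_ge0 HK x. Qed.
Lemma v0 : v 0 = 0. Proof. by apply/(Qp_eq0 HK). Qed.
Lemma v_eq0 x : (v x = 0) <-> x = 0. Proof. exact: Qp_eq0 HK x. Qed.
Lemma vM x y : v (x * y) = v x * v y. Proof. exact: (Qp_mul HK x y). Qed.
Lemma v_gt0 x : x != 0 -> 0 < v x.
Proof.
move=> /eqP nx; rewrite lt_def v_ge0 andbT; apply/eqP => /v_eq0; exact: nx.
Qed.
Lemma v1 : v 1 = 1.
Proof.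
have h := vM 1 1; rewrite mulr1 in h.
have h1 : v 1 != 0 by apply/eqP => /v_eq0 /eqP; rewrite oner_eq0.
by apply: (mulfI h1); rewrite mulr1 -h.
Qed.
Lemma vN1 : v (-1) = 1.
Proof.
have h := vM (-1) (-1); rewrite mulrNN mulr1 v1 in h.
have h0 := v_ge0 (-1).
nra.
Qed.
Lemma vN x : v (- x) = v x.
Proof. by rewrite -mulN1r vM vN1 mul1r. Qed.
Lemma vD_le x y c : v x <= c -> v y <= c -> v (x + y) <= c.
Proof.
move=> hx hy; apply: le_trans (Qp_ultra HK x y) _.
by rewrite ge_max hx hy.
Qed.
Lemma vD_lt x y c : v x < c -> v y < c -> v (x + y) < c.
Proof.
move=> hx hy; apply: le_lt_trans (Qp_ultra HK x y) _.
by rewrite gt_max hx hy.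
Qed.
Lemma vB_le x y c : v x <= c -> v y <= c -> v (x - y) <= c.
Proof. by move=> hx hy; apply: vD_le => //; rewrite vN. Qed.
Lemma vB_lt x y c : v x < c -> v y < c -> v (x - y) < c.
Proof. by move=> hx hy; apply: vD_lt => //; rewrite vN. Qed.
Lemma vBC x y : v (x - y) = v (y - x).
Proof. by rewrite -vN opprB. Qed.

Lemma vnat n : v (n%:R) <= 1.
Proof.
elim: n => [|n IH]; first by rewrite v0 ler01.
by rewrite -addn1 natrD; apply: vD_le; rewrite // v1.
Qed.
Lemma vint (z : int) : v (z%:~R) <= 1.
Proof. by case: z => n; rewrite ?NegzE ?mulrNz ?vN vnat. Qed.

Lemma vsum (I : Type) (r : seq I) (P : pred I) (F : I -> K) c :
  0 <= c -> (forall i, P i -> v (F i) <= c) -> v (\sum_(i <- r | P i) F i) <= c.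
Proof.
move=> c0 h; apply: (big_ind (fun x => v x <= c)) => //; first by rewrite v0.
by move=> x y; apply: vD_le.
Qed.

Lemma vsum_lt (I : Type) (r : seq I) (P : pred I) (F : I -> K) c :
  0 < c -> (forall i, P i -> v (F i) < c) -> v (\sum_(i <- r | P i) F i) < c.
Proof.
move=> c0 h; apply: (big_ind (fun x => v x < c)) => //; first by rewrite v0.
by move=> x y; apply: vD_lt.
Qed.

Lemma vM_le x y a b : v x <= a -> v y <= b -> 0 <= a -> v (x * y) <= a * b.
Proof.
move=> hx hy a0; rewrite vM; apply: le_trans (ler_wpM2l (v_ge0 x) hy) _.
apply: ler_wpM2r => //; apply: le_trans (v_ge0 y) hy.
Qed.

Lemma vV x : x != 0 -> v (x^-1) = (v x)^-1.
Proof.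
move=> nx; have h := vM x x^-1; rewrite mulfV // v1 in h.
have hx : v x != 0 by rewrite gt_eqF // v_gt0.
by apply: (mulfI hx); rewrite -h mulfV.
Qed.

Definition r : R := p%:R.
Lemma p_gt1 : (1 < p)%N. Proof. exact: prime_gt1. Qed.
Lemma r_gt1 : 1 < r. Proof. by rewrite /r ltr1n p_gt1. Qed.
Lemma r_gt0 : 0 < r. Proof. have := r_gt1; lra. Qed.
Lemma vp : v (p%:R) = r^-1. Proof. exact: Qp_vp HK. Qed.

Lemma natr_neq0 n : (0 < n)%N -> (n%:R : K) != 0.
Proof.
elim/ltn_ind: n => n IH n0.
case pn: (p %| n)%N.
- move: pn => /dvdnP [m em]; rewrite em natrM mulf_neq0 //.
  + apply: IH; first by rewrite em ltn_Pmulr ?p_gt1 //; move: n0; rewrite em muln_gt0 => /andP[].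
    by move: n0; rewrite em muln_gt0 => /andP[].
  + apply/eqP => e; have := vp; rewrite e v0 => /esym/eqP; rewrite invr_eq0.
    by rewrite gt_eqF // r_gt0.
- have c : coprime n p by rewrite coprime_sym prime_coprime // pn.
  apply/eqP => e; have := Qp_vunit HK c; rewrite e v0 => /eqP; by rewrite eq_sym oner_eq0.
Qed.

Lemma vexp x n : v (x ^+ n) = v x ^+ n.
Proof. by elim: n => [|n IH]; rewrite ?expr0 ?v1 // !exprS vM IH. Qed.

Lemma vpow n : v ((p%:R) ^+ n) = r^-1 ^+ n.
Proof. by rewrite vexp vp. Qed.

Lemma vdvd k n : (p ^ k %| n)%N -> v (n%:R) <= r^-1 ^+ k.
Proof.
move=> /dvdnP [m ->]; rewrite natrM natrX vM vpow.
rewrite -[X in _ <= X]mul1r ler_wpM2r ?vnat //.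
by rewrite exprn_ge0 // invr_ge0 ltW // r_gt0.
Qed.

Lemma rpow_small e : 0 < e -> exists k, r^-1 ^+ k < e.
Proof.
move=> e0; have e0' : 0 <= e^-1 by rewrite invr_ge0 ltW.
have h := @archi_boundP R (e^-1) e0'.
set n := Num.Def.archi_bound _ in h.
exists n; rewrite exprVn -(invrK e) ltf_pV2 ?posrE ?invr_gt0 ?exprn_gt0 ?r_gt0 //.
apply: lt_trans h _; rewrite /r -natrX ltr_nat ltn_expl //; exact: p_gt1.
Qed.


Definition cvgK (u : nat -> K) (l : K) :=
  forall e, 0 < e -> exists N, forall n, (N <= n)%N -> v (u n - l) < e.
Definition cauchyK (u : nat -> K) :=
  forall e : R, 0 < e -> exists N : nat, forall m n : nat,
        (N <= m)%N -> (N <= n)%N -> v (u m - u n) < e.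
Definition limK (u : nat -> K) : K := epsilon (inhabits 0) (cvgK u).

Lemma v_small_eq0 x : (forall e, 0 < e -> v x < e) -> x = 0.
Proof.
move=> h; apply/v_eq0; apply/eqP; rewrite eq_le v_ge0 andbT.
apply/negP => /negP; rewrite -ltNge => hx.
by have := h _ hx; rewrite ltxx.
Qed.

Lemma cvg_unique u l1 l2 : cvgK u l1 -> cvgK u l2 -> l1 = l2.
Proof.
move=> h1 h2; apply/eqP; rewrite -subr_eq0; apply/eqP/v_small_eq0 => e e0.
have [N1 H1] := h1 e e0; have [N2 H2] := h2 e e0.
have -> : l1 - l2 = (u (maxn N1 N2) - l2) - (u (maxn N1 N2) - l1) by ring.
by apply: vB_lt; [apply: H2 | apply: H1]; rewrite ?leq_maxl ?leq_maxr.
Qed.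

Lemma limK_cvg u : cauchyK u -> cvgK u (limK u).
Proof.
move=> h; rewrite /limK; apply: epsilon_spec.
have [l hl] := Qp_complete HK h; by exists l.
Qed.

Lemma limK_eq u l : cvgK u l -> limK u = l.
Proof.
move=> h; apply: (@cvg_unique u) => //; rewrite /limK; apply: epsilon_spec; by exists l.
Qed.

Lemma cvg_cauchy u l : cvgK u l -> cauchyK u.
Proof.
move=> h e e0; have [N HN] := h e e0; exists N => m n hm hn.
have -> : u m - u n = (u m - l) - (u n - l) by ring.
by apply: vB_lt; apply: HN.
Qed.

Lemma cvg_add u w l1 l2 : cvgK u l1 -> cvgK w l2 -> cvgK (fun n => u n + w n) (l1 + l2).
Proof.
move=> h1 h2 e e0; have [N1 H1] := h1 e e0; have [N2 H2] := h2 e e0.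
exists (maxn N1 N2) => n hn.
have -> : u n + w n - (l1 + l2) = (u n - l1) + (w n - l2) by ring.
apply: vD_lt; [apply: H1 | apply: H2]; apply: leq_trans hn; by rewrite ?leq_maxl ?leq_maxr.
Qed.

Lemma cvg_scale a u l : cvgK u l -> cvgK (fun n => a * u n) (a * l).
Proof.
move=> h e e0; have [->|a0] := eqVneq a 0.
  by exists 0%N => n _; rewrite !mul0r subrr v0.
have va : 0 < v a by apply: v_gt0.
have [N HN] := h (e / v a) (divr_gt0 e0 va); exists N => n hn.
rewrite -mulrBr vM; have H := HN n hn.
have : v a * v (u n - l) < v a * (e / v a) by rewrite ltr_pM2l.
by rewrite mulrCA mulfV ?mulr1 // gt_eqF.
Qed.

Lemma cvg_const c : cvgK (fun _ => c) c.
Proof. by move=> e e0; exists 0%N => n _; rewrite subrr v0. Qed.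

Lemma cvg_ext u w l : (exists N, forall n, (N <= n)%N -> u n = w n) -> cvgK u l -> cvgK w l.
Proof.
move=> [N0 HN0] h e e0; have [N HN] := h e e0; exists (maxn N0 N) => n hn.
rewrite -HN0; first (apply: HN; apply: leq_trans hn; exact: leq_maxr).
apply: leq_trans hn; exact: leq_maxl.
Qed.

Lemma cvg_le u l w c : cvgK u l -> (exists N, forall n, (N <= n)%N -> v (u n - w) <= c) ->
  v (l - w) <= c.
Proof.
move=> h [N HN]; rewrite leNgt; apply/negP => hc.
have c0 : 0 < v (l - w) - c by rewrite subr_gt0.
have [N1 H1] := h _ c0.
set n := maxn N N1.
have h1 := H1 n (leq_maxr _ _); have h2 := HN n (leq_maxl _ _).
have : v (l - w) <= Num.max (v (l - u n)) (v (u n - w)).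
  have -> : l - w = (l - u n) + (u n - w) by ring.
  exact: (Qp_ultra HK (l - u n) (u n - w)).
rewrite vBC in h1.
have g1 := v_ge0 (l - u n); have g2 := v_ge0 (u n - w).
rewrite le_max => /orP [] hh; lra.
Qed.

Lemma cvg_lt u l w c : cvgK u l -> (exists N, forall n, (N <= n)%N -> v (u n - w) < c) ->
  v (l - w) < c.
Proof.
move=> h [N HN].
have c0 : 0 < c by apply: le_lt_trans (HN N (leqnn _)); exact: v_ge0.
have [N1 H1] := h _ c0.
set n := maxn N N1.
have h1 := H1 n (leq_maxr _ _); have h2 := HN n (leq_maxl _ _).
have -> : l - w = - (u n - l) + (u n - w) by ring.
by apply: vD_lt; rewrite ?vN.
Qed.


Definition Dif (g : nat -> K) : nat -> K := fun x => g x.+1 - g x.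
Definition Dn (n : nat) (g : nat -> K) : nat -> K := iter n Dif g.

Lemma DnS n g : Dn n.+1 g = Dif (Dn n g). Proof. by []. Qed.
Lemma DnSr n g : Dn n.+1 g = Dn n (Dif g). Proof. by rewrite /Dn iterSr. Qed.
Lemma DnD m n g : Dn (m + n) g = Dn m (Dn n g). Proof. by rewrite /Dn iterD. Qed.

Lemma Dn_add n g h : Dn n (fun x => g x + h x) = (fun x => Dn n g x + Dn n h x).
Proof.
elim: n => [|n IH]; first by []. rewrite !DnS IH; apply: functional_extensionality => x.
rewrite /Dif; ring.
Qed.
Lemma Dn_scale n a g : Dn n (fun x => a * g x) = (fun x => a * Dn n g x).
Proof.
elim: n => [|n IH]; first by []. rewrite !DnS IH; apply: functional_extensionality => x.
rewrite /Dif; ring.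
Qed.
Lemma Dn_opp n g : Dn n (fun x => - g x) = (fun x => - Dn n g x).
Proof.
elim: n => [|n IH]; first by []. rewrite !DnS IH; apply: functional_extensionality => x.
rewrite /Dif; ring.
Qed.
Lemma Dn_sub n g h : Dn n (fun x => g x - h x) = (fun x => Dn n g x - Dn n h x).
Proof. by rewrite Dn_add Dn_opp. Qed.
Lemma Dn_shift n q g : Dn n (fun x => g (x + q)%N) = (fun x => Dn n g (x + q)%N).
Proof.
elim: n => [|n IH]; first by []. rewrite !DnS IH; apply: functional_extensionality => x.
by rewrite /Dif addSn.
Qed.
Lemma Dn_bound n g c : (forall x, v (g x) <= c) -> forall x, v (Dn n g x) <= c.
Proof.
elim: n g => [|n IH] g hg x; first exact: hg. rewrite DnSr; apply: IH => y.
by rewrite /Dif; apply: vB_le.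
Qed.
Lemma Dn_const n c : Dn n.+1 (fun _ => c) = (fun _ => 0).
Proof.
elim: n => [|n IH]; first by apply: functional_extensionality => x; rewrite /Dn /= /Dif subrr.
rewrite DnS IH; apply: functional_extensionality => x; by rewrite /Dif subrr.
Qed.

Definition sgn n i : K := (-1) ^+ (n + i) * ('C(n, i))%:R.

Lemma Dn_formula n g x :
  Dn n g x = \sum_(0 <= i < n.+1) sgn n i * g (x + i)%N.
Proof.
elim: n x => [|n IH] x.
  by rewrite big_nat1 /sgn !addn0 expr0 mul1r bin0 mul1r.
rewrite DnS /Dif !IH.
have hT : \sum_(0 <= i < n.+2) sgn n.+1 i * g (x + i)%N =
   - (sgn n 0 * g x) + \sum_(0 <= i < n.+1) sgn n i * g (x.+1 + i)%N
   + \sum_(0 <= i < n.+1) (-1) ^+ (n + i) * ('C(n, i.+1))%:R * g (x + i.+1)%N.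
  rewrite big_nat_recl // addn0 /sgn !bin0 exprS mulN1r !mulNr -addrA; congr (_ + _).
  rewrite -big_split /=; apply: eq_bigr => i _.
  rewrite binS natrD addSn addnS !exprS !mulN1r opprK addSn addnS; ring.
have hB : \sum_(0 <= i < n.+1) sgn n i * g (x + i)%N =
   sgn n 0 * g x + \sum_(0 <= i < n) sgn n i.+1 * g (x + i.+1)%N.
  by rewrite big_nat_recl // addn0.
have hC : \sum_(0 <= i < n.+1) (-1) ^+ (n + i) * ('C(n, i.+1))%:R * g (x + i.+1)%N =
   - \sum_(0 <= i < n) sgn n i.+1 * g (x + i.+1)%N.
  rewrite big_nat_recr // bin_small //= mulr0n mulr0 mul0r addr0 -sumrN.
  apply: eq_bigr => i _; rewrite /sgn [(n + i.+1)%N]addnS exprS; ring.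
rewrite hT hB hC; ring.
Qed.


Lemma newton m g : g m = \sum_(0 <= i < m.+1) ('C(m, i))%:R * Dn i g 0%N.
Proof.
elim: m g => [|m IH] g; first by rewrite big_nat1 bin0 mul1r.
have -> : g m.+1 = g m + Dif g m by rewrite /Dif; ring.
rewrite (IH g) (IH (Dif g)).
rewrite [in RHS]big_nat_recl // bin0.
have hR : \sum_(0 <= i < m.+1) ('C(m.+1, i.+1))%:R * Dn i.+1 g 0%N =
   \sum_(0 <= i < m.+1) ('C(m, i.+1))%:R * Dn i.+1 g 0%N + \sum_(0 <= i < m.+1) ('C(m, i))%:R * Dn i.+1 g 0%N.
  by rewrite -big_split; apply: eq_bigr => i _ /=; rewrite binS natrD mulrDl.
have hL : \sum_(0 <= i < m.+1) ('C(m, i))%:R * Dn i g 0%N =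
   1%:R * Dn 0 g 0%N + \sum_(0 <= i < m.+1) ('C(m, i.+1))%:R * Dn i.+1 g 0%N.
  rewrite big_nat_recl // bin0; congr (_ + _).
  by rewrite [in RHS]big_nat_recr //= bin_small // mulr0n mul0r addr0.
have hD : \sum_(0 <= i < m.+1) ('C(m, i))%:R * Dn i (Dif g) 0%N =
   \sum_(0 <= i < m.+1) ('C(m, i))%:R * Dn i.+1 g 0%N.
  by apply: eq_bigr => i _; rewrite DnSr.
rewrite hR hL hD; ring.
Qed.

Lemma p_dvd_bin m i : (0 < i)%N -> (i < p ^ m)%N -> (p %| 'C(p ^ m, i))%N.
Proof.
move=> i0 im; apply/negP => nd.
have cop : coprime (p ^ m) 'C(p ^ m, i).
  by apply: coprimeXl; rewrite prime_coprime //; apply/negP.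
have e := mul_bin_diag (p ^ m) i.-1.
rewrite prednK // in e.
have : (p ^ m %| i * 'C(p ^ m, i))%N by rewrite -e dvdn_mulr.
rewrite mulnC Gauss_dvdr // => /(dvdn_leq i0); rewrite leqNgt im.
done.
Qed.

Lemma r_inv_half : r^-1 <= 2^-1.
Proof.
rewrite lef_pV2 ?posrE ?r_gt0 //; rewrite /r ler_nat; exact: p_gt1.
Qed.

Lemma rinv_ge0 : 0 <= r^-1. Proof. by rewrite invr_ge0 ltW // r_gt0. Qed.


Lemma v_sign_plus1 m : v ((-1) ^+ (p ^ m) + 1) <= r^-1.
Proof.
case: (even_prime pr_p) => hp.
- case: m => [|m].
    by rewrite expn0 expr1 addNr v0 rinv_ge0.
  rewrite hp -signr_odd oddX /= expr0.
  have -> : (1 + 1 : K) = p%:R by rewrite hp.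
  by rewrite vp.
- rewrite -signr_odd oddX hp orbT expr1 addNr v0. exact: rinv_ge0.
Qed.

Lemma v_sgnpow k : v ((-1) ^+ k) = 1.
Proof. by rewrite vexp vN1 expr1n. Qed.

Lemma decay_step m g c d : 0 <= c -> 0 <= d ->
  (forall x, v (g x) <= c) -> (forall x, v (g (x + p ^ m)%N - g x) <= d) ->
  forall x, v (Dn (p ^ m) g x) <= d + c * r^-1.
Proof.
move=> c0 d0 hg hd x.
have q0 : (0 < p ^ m)%N by rewrite expn_gt0 prime_gt0.
have cr : 0 <= c * r^-1 by rewrite mulr_ge0 // rinv_ge0.
have [q' eq'] : exists q', (p ^ m)%N = q'.+1 by exists (p ^ m).-1; rewrite prednK.
rewrite Dn_formula.
rewrite eq' in hd *.
rewrite big_nat_recl // big_nat_recr //=.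
have hs : sgn q'.+1 q'.+1 = 1 by rewrite /sgn binn -signr_odd oddD addbb expr0 mul1r.
rewrite hs mul1r.
set M := \sum_(0 <= i < q') _.
have -> : sgn q'.+1 0 * g (x + 0)%N + (M + g (x + q'.+1)%N) =
  (g (x + q'.+1)%N - g x) + ((sgn q'.+1 0 + 1) * g x + M).
  rewrite addn0; ring.
apply: vD_le; first by rewrite (le_trans (hd x)) // lerDl.
apply: vD_le.
  rewrite vM mulrC; apply: (@le_trans _ _ (c * r^-1)); last by rewrite lerDr.
  apply: ler_pM => //; [exact: v_ge0 | exact: v_ge0 |].
  rewrite /sgn bin0 mulr1 addn0 -eq'; exact: v_sign_plus1.
rewrite /M big_seq_cond; apply: vsum; first by rewrite addr_ge0.
move=> i /andP [hi _]; rewrite mem_index_iota in hi; rewrite vM mulrC; apply: (@le_trans _ _ (c * r^-1)); last by rewrite lerDr.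
apply: ler_pM => //; [exact: v_ge0 | exact: v_ge0 |].
rewrite /sgn vM v_sgnpow mul1r -(expr1 r^-1); apply: vdvd.
by rewrite expn1 -eq'; apply: p_dvd_bin => //; rewrite eq' ltnS.
Qed.


Lemma decay_iter m f d : 0 <= d -> (forall x, v (f x) <= 1) ->
  (forall x, v (f (x + p ^ m)%N - f x) <= d) ->
  forall j x, v (Dn (j * p ^ m) f x) <= 2 * d + r^-1 ^+ j.
Proof.
move=> d0 hf hd; elim=> [|j IH] x.
  by rewrite mul0n expr0 /=; apply: le_trans (hf x) _; rewrite lerDr mulr_ge0.
rewrite mulSn DnD.
have c0 : 0 <= 2 * d + r^-1 ^+ j by rewrite addr_ge0 ?mulr_ge0 ?exprn_ge0 ?rinv_ge0.
have hper : forall y, v (Dn (j * p ^ m) f (y + p ^ m)%N - Dn (j * p ^ m) f y) <= d.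
  move=> y.
  have e := congr1 (fun h => h y) (Dn_sub (j * p ^ m) (fun z => f (z + p ^ m)%N) f).
  rewrite Dn_shift /= in e; rewrite -e; by apply: Dn_bound.
apply: le_trans (decay_step c0 d0 IH hper x) _.
have h1 := r_inv_half; have h2 := rinv_ge0.
have h3 : 0 <= r^-1 ^+ j by rewrite exprn_ge0.
rewrite exprSr; nra.
Qed.

Lemma decay f : (forall x, v (f x) <= 1) ->
  (forall d, 0 < d -> exists m, forall x, v (f (x + p ^ m)%N - f x) <= d) ->
  forall e, 0 < e -> exists N, forall n, (N <= n)%N -> v (Dn n f 0%N) <= e.
Proof.
move=> hf hu e e0.
have [m hm] := hu (e / 4) (divr_gt0 e0 (ltr0Sn _ 3)).
have [j hj] := rpow_small (divr_gt0 e0 (ltr0Sn _ 1)).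
exists (j * p ^ m)%N => n hn.
rewrite -(subnK hn) DnD.
have H : forall x, v (Dn (j * p ^ m) f x) <= 2 * (e / 4) + r^-1 ^+ j.
  by apply: decay_iter => //; lra.
have := Dn_bound (n - j * p ^ m) H 0%N; lra.
Qed.


Lemma vnat_mod k a b : (a %% p ^ k = b %% p ^ k)%N -> v (a%:R - b%:R) <= r^-1 ^+ k.
Proof.
move=> h.
wlog ba : a b h / (b <= a)%N.
  move=> W; case: (leqP b a) => hab; first exact: W.
  rewrite vBC; apply: W => //; exact: ltnW.
rewrite -natrB //; apply: vdvd; rewrite -eqn_mod_dvd //; exact/eqP.
Qed.

Section Compact.
Variable f : K -> K.
Hypothesis Hf : CZpZp v f.

Lemma vnatZ (n : nat) : Zp_elem v (n%:R). Proof. exact: vnat. Qed.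

Lemma unif_cont d : 0 < d ->
  exists m, forall x : nat, v (f ((x + p ^ m)%N%:R) - f (x%:R)) <= d.
Proof.
move=> d0; apply: NNPP => hn.
have hx : forall m, exists x : nat, d < v (f ((x + p ^ m)%N%:R) - f (x%:R)).
  move=> m; apply: NNPP => h2; apply: hn; exists m => x.
  rewrite leNgt; apply/negP => h3; apply: h2; by exists x.
pose xs m := epsilon (inhabits 0%N) (fun x : nat => d < v (f ((x + p ^ m)%N%:R) - f (x%:R))).
have hxs : forall m, d < v (f ((xs m + p ^ m)%N%:R) - f ((xs m)%:R)).
  move=> m; exact: (epsilon_spec (inhabits 0%N) _ (hx m)).
pose Inf k c := forall M, exists m, (M <= m)%N /\ (xs m %% p ^ k = c)%N.
have p0 : (0 < p)%N by exact: prime_gt0.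
have pk0 : forall k, (0 < p ^ k)%N by move=> k; rewrite expn_gt0 p0.
have step : forall k c, (c < p ^ k)%N -> Inf k c -> exists t, (t < p)%N /\ Inf k.+1 (c + t * p ^ k)%N.
  move=> k c hc hI; apply: NNPP => hno.
  have hb : forall s, (s <= p)%N -> exists M, forall t, (t < s)%N -> forall m, (M <= m)%N ->
      (xs m %% p ^ k.+1 != c + t * p ^ k)%N.
    elim=> [|s IH] hs; first by exists 0%N.
    have [M1 H1] := IH (ltnW hs).
    have : ~ Inf k.+1 (c + s * p ^ k)%N by move=> hI2; apply: hno; exists s; split.
    move=> hnI.
    have [M2 H2] : exists M2, forall m, (M2 <= m)%N -> (xs m %% p ^ k.+1 != c + s * p ^ k)%N.
      apply: NNPP => h3; apply: hnI => M; apply: NNPP => h4; apply: h3; exists M => m hm.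
      apply/negP => /eqP e; apply: h4; exists m; split => //.
    exists (maxn M1 M2) => t; rewrite ltnS leq_eqVlt => /orP [/eqP ->|ht] m hm.
      apply: H2; apply: leq_trans hm; exact: leq_maxr.
    apply: H1 => //; apply: leq_trans hm; exact: leq_maxl.
  have [M HM] := hb p (leqnn p).
  have [m [hm hmod]] := hI M.
  set w := (xs m %% p ^ k.+1)%N.
  have hw : (w %% p ^ k = c)%N.
    by rewrite /w (modn_dvdm (xs m) (dvdn_exp2l p (leqnSn k))).
  have ht : (w %/ p ^ k < p)%N.
    by rewrite ltn_divLR // mulnC -expnSr ltn_mod.
  have := HM _ ht m hm; rewrite -/w; move/negP; apply; apply/eqP.
  by rewrite {1}(divn_eq w (p ^ k)) hw addnC.
pose tsel k c := epsilon (inhabits 0%N) (fun t => (t < p)%N /\ Inf k.+1 (c + t * p ^ k)%N).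
pose cs := fix cs k := match k with 0%N => 0%N | k'.+1 => (cs k' + tsel k' (cs k') * p ^ k')%N end.
have csS : forall k, cs k.+1 = (cs k + tsel k (cs k) * p ^ k)%N by [].
have inv : forall k, (cs k < p ^ k)%N /\ Inf k (cs k).
  elim=> [|k [IH1 IH2]].
    split => //= M; exists M; split => //; by rewrite expn0 modn1.
  have [t [ht hI]] := step _ _ IH1 IH2.
  have hts := epsilon_spec (inhabits 0%N) (fun t => (t < p)%N /\ Inf k.+1 (cs k + t * p ^ k)%N) (ex_intro _ t (conj ht hI)).
  rewrite -/(tsel k (cs k)) in hts; case: hts => h1 h2.
  rewrite csS; split => //; rewrite expnS.
  have := pk0 k; nia.
have csmod : forall j k, (j <= k)%N -> (cs k %% p ^ j = cs j)%N.
  move=> j; elim=> [|k IH] hjk.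
    by move: hjk; rewrite leqn0 => /eqP ->; rewrite modn_small //; case: (inv 0%N).
  case: (leqP j k) => hj; last first.
    have -> : j = k.+1 by apply/eqP; rewrite eqn_leq hjk hj.
    by rewrite modn_small //; case: (inv k.+1).
  rewrite -(IH hj) -(modn_dvdm (cs k.+1) (dvdn_exp2l p hj)) csS.
  by rewrite addnC modnMDl (modn_small (proj1 (inv k))).
pose u k : K := (cs k)%:R.
have ucv : forall j k, (j <= k)%N -> v (u k - u j) <= r^-1 ^+ j.
  move=> j k hjk; apply: vnat_mod; rewrite csmod // modn_small //; by case: (inv j).
have ucauchy : cauchyK u.
  move=> e e0; have [j hj] := rpow_small e0; exists j => m n hm hn2.
  have -> : u m - u n = (u m - u j) - (u n - u j) by ring.
  apply: vB_lt; apply: le_lt_trans hj; exact: ucv.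
set y := limK u.
have ycv := limK_cvg ucauchy; rewrite -/y in ycv.
have hy : forall j, v (y - u j) <= r^-1 ^+ j.
  move=> j; apply: (cvg_le ycv); exists j => k hk; exact: ucv.
have yZ : Zp_elem v y.
  rewrite /Zp_elem -[y]subr0; apply: (cvg_le ycv); exists 0%N => k _; rewrite subr0; exact: vnat.
have [de [de0 Hde]] := (proj2 Hf) y yZ d d0.
have [j hj] := rpow_small de0.
have [m [hm hmod]] := (proj2 (inv j)) j.
set x := xs m in hmod.
have hxy : v (x%:R - y) < de.
  have -> : x%:R - y = (x%:R - u j) - (y - u j) by ring.
  apply: vB_lt; last exact: le_lt_trans (hy j) hj.
  apply: le_lt_trans hj; apply: vnat_mod; rewrite hmod modn_small //; by case: (inv j).
have hxy2 : v ((x + p ^ m)%N%:R - y) < de.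
  have -> : (x + p ^ m)%N%:R - y = (p ^ m)%N%:R + (x%:R - y) by rewrite natrD; ring.
  apply: vD_lt => //; apply: le_lt_trans hj; apply: vdvd; exact: dvdn_exp2l.
have h1 := Hde _ (vnatZ _) hxy; have h2 := Hde _ (vnatZ _) hxy2.
have := hxs m; rewrite -/x.
have -> : f ((x + p ^ m)%N%:R) - f (x%:R) = (f ((x + p ^ m)%N%:R) - f y) - (f (x%:R) - f y) by ring.
move=> h3; have h4 := vB_lt h2 h1; rewrite ltNge in h3; move/negP: h3; apply; exact: ltW.
Qed.

End Compact.


Definition fN (f : K -> K) : nat -> K := fun m => f (m%:R).
Definition mc (f : K -> K) (n : nat) : K := Dn n (fN f) 0%N.

Lemma mc_decay f : CZpZp v f -> forall e, 0 < e -> exists N, forall n, (N <= n)%N -> v (mc f n) <= e.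
Proof.
move=> Hf; apply: decay; first by move=> x; apply: (proj1 Hf); exact: vnat.
move=> d d0; have [m hm] := unif_cont Hf d0; exists m => x; exact: hm.
Qed.

Lemma mc_bound f c : (forall x, Zp_elem v x -> v (f x) <= c) -> forall n, v (mc f n) <= c.
Proof. by move=> hf n; apply: Dn_bound => x; apply: hf; exact: vnat. Qed.

Lemma mc_add f g n : mc (fun x => f x + g x) n = mc f n + mc g n.
Proof. by rewrite /mc /fN (Dn_add n (fun m => f m%:R) (fun m => g m%:R)). Qed.

Lemma mc_scale a f n : mc (fun x => a * f x) n = a * mc f n.
Proof. by rewrite /mc /fN (Dn_scale n a (fun m => f m%:R)). Qed.

Lemma mc_one n : mc (fun _ => 1) n = (n == 0%N)%:R.
Proof. by case: n => [|n] //; rewrite /mc /fN Dn_const. Qed.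

Lemma mc_id n : mc (fun x => x) n = (n == 1%N)%:R.
Proof.
have D1 : Dn 1 (fun m : nat => (m%:R : K)) = (fun _ => (1 : K)).
  by apply: functional_extensionality => x; rewrite /Dn /= /Dif -natrB // subSnn.
case: n => [|[|n]] //; rewrite /mc /fN.
  by rewrite D1.
by rewrite -[n.+2]addn1 DnD D1 Dn_const addn1.
Qed.

Lemma newton_mc f m : f (m%:R) = \sum_(0 <= i < m.+1) ('C(m, i))%:R * mc f i.
Proof. exact: (newton m (fN f)). Qed.


Section Ops.
Variables (X : countType) (A : Op K X).
Hypothesis HA : isBop v A.
Hypothesis Hnc : normal_contraction v A.

Local Notation QX := (@inQpX R K v X).
Implicit Types xi eta zeta : X -> K.

Lemma QX0 : QX (fun _ : X => 0).
Proof. by exists [::] => i; rewrite v0 ltNge ler01. Qed.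

Lemma QX_bnd xi : (forall i, v (xi i) <= 1) -> QX xi.
Proof. by move=> h; exists [::] => i; rewrite ltNge h. Qed.

Lemma QXD xi eta : QX xi -> QX eta -> QX (fun i => xi i + eta i).
Proof.
move=> [s1 h1] [s2 h2]; exists (s1 ++ s2) => i hi; rewrite mem_cat.
case: (ltP 1 (v (xi i))) => [/h1 -> //|a]; case: (ltP 1 (v (eta i))) => [/h2 ->|b]; first by rewrite orbT.
by move: hi; rewrite ltNge (vD_le a b).
Qed.

Lemma QXZ a xi : Zp_elem v a -> QX xi -> QX (fun i => a * xi i).
Proof.
move=> ha [s h]; exists s => i hi; apply: h; rewrite ltNge; apply/negP => b.
move: hi; rewrite ltNge; move/negP; apply; rewrite vM -[1]mulr1 ler_pM //; exact: v_ge0.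
Qed.

Lemma Zp_N1 : Zp_elem v (-1). Proof. by rewrite /Zp_elem vN1. Qed.
Lemma Zp_nat n : Zp_elem v (n%:R). Proof. exact: vnat. Qed.
Lemma Zp_M a b : Zp_elem v a -> Zp_elem v b -> Zp_elem v (a * b).
Proof. move=> ha hb; rewrite /Zp_elem vM -[1]mulr1 ler_pM //; exact: v_ge0. Qed.

Lemma QXN xi : QX xi -> QX (fun i => - xi i).
Proof.
move=> h; have -> : (fun i => - xi i) = (fun i => -1 * xi i).
  by apply: functional_extensionality => i; rewrite mulN1r.
exact: QXZ Zp_N1 h.
Qed.

Lemma QXB xi eta : QX xi -> QX eta -> QX (fun i => xi i - eta i).
Proof. move=> h1 h2; exact: QXD h1 (QXN h2). Qed.

Lemma QX_sum (N : nat) (F : nat -> X -> K) : (forall k, QX (F k)) -> QX (fun i => \sum_(0 <= k < N) F k i).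
Proof.
move=> h; elim: N => [|N IH].
  have -> : (fun i => \sum_(0 <= k < 0) F k i) = (fun _ => 0).
    by apply: functional_extensionality => i; rewrite big_geq.
  exact: QX0.
have -> : (fun i => \sum_(0 <= k < N.+1) F k i) = (fun i => \sum_(0 <= k < N) F k i + F N i).
  by apply: functional_extensionality => i; rewrite big_nat_recr.
exact: QXD.
Qed.

Section BopLemmas.
Variable T : Op K X.
Hypothesis HT : isBop v T.

Lemma bopQ xi : QX xi -> QX (T xi). Proof. by case: HT => h _ _ _; exact: h. Qed.
Lemma bopD xi eta : QX xi -> QX eta -> T (fun i => xi i + eta i) = (fun i => T xi i + T eta i).
Proof. by case: HT => _ h _ _; exact: h. Qed.
Lemma bopZ a xi : Zp_elem v a -> QX xi -> T (fun i => a * xi i) = (fun i => a * T xi i).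
Proof. by case: HT => _ _ h _; exact: h. Qed.
Lemma bop0 : T (fun _ : X => 0) = (fun _ : X => 0).
Proof.
have := bopZ (a := 0) (vnat 0%N) QX0.
have -> : (fun i : X => 0%:R * 0) = (fun _ => 0 : K).
  by apply: functional_extensionality => i; rewrite mul0r.
move=> ->; by apply: functional_extensionality => i; rewrite mul0r.
Qed.
Lemma bopN xi : QX xi -> T (fun i => - xi i) = (fun i => - T xi i).
Proof.
move=> h; have := bopZ Zp_N1 h.
have -> : (fun i => -1 * xi i) = (fun i => - xi i).
  by apply: functional_extensionality => i; rewrite mulN1r.
move=> ->; by apply: functional_extensionality => i; rewrite mulN1r.
Qed.
Lemma bopB xi eta : QX xi -> QX eta -> T (fun i => xi i - eta i) = (fun i => T xi i - T eta i).
Proof. by move=> h1 h2; rewrite bopD ?bopN //; exact: QXN. Qed.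
Lemma bop_sum N (s : nat -> K) (F : nat -> X -> K) :
  (forall k, Zp_elem v (s k)) -> (forall k, QX (F k)) ->
  T (fun i => \sum_(0 <= k < N) s k * F k i) = (fun i => \sum_(0 <= k < N) s k * T (F k) i).
Proof.
move=> hs hF; elim: N => [|N IH].
  have -> : (fun i => \sum_(0 <= k < 0) s k * F k i) = (fun _ => 0).
    by apply: functional_extensionality => i; rewrite big_geq.
  rewrite bop0; by apply: functional_extensionality => i; rewrite big_geq.
have -> : (fun i => \sum_(0 <= k < N.+1) s k * F k i) = (fun i => \sum_(0 <= k < N) s k * F k i + s N * F N i).
  by apply: functional_extensionality => i; rewrite big_nat_recr.
rewrite bopD; last 2 first.
- apply: QX_sum => k; exact: QXZ.
- exact: QXZ.
rewrite IH bopZ //; apply: functional_extensionality => i; by rewrite big_nat_recr.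
Qed.

End BopLemmas.


Lemma bop_norm T c b xi : isBop v T -> opnorm_le v T c -> b != 0 -> QX xi ->
  (forall i, v (xi i) <= v b) -> forall i, v (T xi i) <= c * v b.
Proof.
move=> HT hn b0 hx hb i.
have vb0 : 0 < v b by apply: v_gt0.
pose eta := fun i => b^-1 * xi i.
have he : forall i, v (eta i) <= 1.
  move=> j; rewrite /eta vM vV // -(@mulVf _ (v b)) ?gt_eqF //; apply: ler_wpM2l; last exact: hb.
  by rewrite invr_ge0 ltW.
have qe : QX eta by apply: QX_bnd.
have hTe := hn eta qe he i.
have hxi : T xi i = b * T eta i.
  case: (leP (v b) 1) => hb1.
    have -> : xi = (fun i => b * eta i).
      by apply: functional_extensionality => j; rewrite /eta mulrA mulfV // mul1r.
    by rewrite (bopZ HT hb1 qe).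
  have hbi : Zp_elem v b^-1 by rewrite /Zp_elem vV // invf_le1 // ltW.
  by rewrite /eta (bopZ HT hbi hx) mulrA mulfV // mul1r.
rewrite hxi vM mulrC; apply: ler_wpM2r => //; exact: ltW.
Qed.

Lemma vprod_ge1 (I : Type) (r : seq I) (F : I -> K) : (forall i, 1 <= v (F i)) -> 1 <= v (\prod_(i <- r) F i).
Proof.
move=> h; apply: (big_ind (fun x => 1 <= v x)); first by rewrite v1.
  by move=> x y hx hy; rewrite vM; nra.
by move=> i _; exact: h.
Qed.

Lemma QX_bound xi : QX xi -> exists b, [/\ b != 0, 1 <= v b & forall i, v (xi i) <= v b].
Proof.
move=> [s hs].
pose G i := if 1 < v (xi i) then xi i else 1.
have hG : forall i, 1 <= v (G i) by move=> i; rewrite /G; case: ifP => [/ltW //|]; rewrite v1.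
exists (\prod_(i <- s) G i); have h1 := vprod_ge1 s hG; split => //.
  by apply/eqP => e; move: h1; rewrite e v0 ler10.
move=> i; case: (ltP 1 (v (xi i))) => hi; last exact: le_trans hi h1.
rewrite (big_rem i (hs i hi)) vM /G hi.
have := vprod_ge1 (rem i s) hG; have := v_ge0 (xi i); nra.
Qed.

Definition Bspec n (B : Op K X) :=
  [/\ isBop v B, eqOp v (fun xi i => n`!%:R * B xi i) (falling A n) & opnorm_le v B 1].
Definition Bn n : Op K X := epsilon (inhabits (fun xi : X -> K => xi)) (Bspec n).

Lemma Bn_spec n : Bspec n (Bn n).
Proof. exact: (epsilon_spec _ _ (Hnc n)). Qed.
Lemma Bn_bop n : isBop v (Bn n). Proof. by case: (Bn_spec n). Qed.
Lemma Bn_fall n xi : QX xi -> (fun i => n`!%:R * Bn n xi i) = falling A n xi.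
Proof. by case: (Bn_spec n) => _ h _; exact: h. Qed.
Lemma Bn_norm n b xi : b != 0 -> QX xi -> (forall i, v (xi i) <= v b) -> forall i, v (Bn n xi i) <= v b.
Proof.
move=> b0 hx hb i.
have hop : opnorm_le v (Bn n) 1 by case: (Bn_spec n).
by have := bop_norm (Bn_bop n) hop b0 hx hb i; rewrite mul1r.
Qed.
Lemma Bn_QX n xi : QX xi -> QX (Bn n xi). Proof. move=> h; exact: (bopQ (Bn_bop n) h). Qed.

Lemma B0 xi : QX xi -> Bn 0 xi = xi.
Proof.
move=> h; have := Bn_fall 0 h; rewrite /= => e.
by apply: functional_extensionality => i; have := congr1 (fun g => g i) e; rewrite /= mul1r.
Qed.

Lemma B1 xi : QX xi -> Bn 1 xi = A xi.
Proof.
move=> h; have := Bn_fall 1 h; rewrite /= => e.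
apply: functional_extensionality => i; have := congr1 (fun g => g i) e; rewrite /= mul1r mul0r subr0.
done.
Qed.

Lemma Brec k xi : QX xi -> forall i,
  A (Bn k xi) i = k%:R * Bn k xi i + k.+1%:R * Bn k.+1 xi i.
Proof.
move=> h i.
have e1 := congr1 (fun g => g i) (Bn_fall k.+1 h); rewrite /= -(Bn_fall k h) in e1.
rewrite (bopZ HA (Zp_nat _) (Bn_QX k h)) in e1.
have kf : (k`!%:R : K) != 0 by apply: natr_neq0; exact: fact_gt0.
rewrite factS natrM in e1.
apply: (mulfI kf); rewrite mulrDr.
have -> : k`!%:R * (k.+1%:R * Bn k.+1 xi i) = k.+1%:R * k`!%:R * Bn k.+1 xi i by ring.
rewrite e1; ring.
Qed.


Definition Oc N (s : nat -> K) xi : X -> K := fun i => \sum_(0 <= k < N) s k * Bn k xi i.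
Definition valc N (s : nat -> K) (m : nat) : K := \sum_(0 <= k < N) s k * ('C(m, k))%:R.
Definition supp N (s : nat -> K) := forall k, (N <= k)%N -> s k = 0.
Definition ZpS (s : nat -> K) := forall k, Zp_elem v (s k).

Lemma sum_supp N N' s (F : nat -> K) : supp N s -> (N <= N')%N ->
  \sum_(0 <= k < N') s k * F k = \sum_(0 <= k < N) s k * F k.
Proof.
move=> hs hN; rewrite (big_cat_nat (leq0n N) hN) /= [Y in _ + Y]big_nat_cond [Y in _ + Y]big1 ?addr0 //.
by move=> k /andP [/andP [h1 _] _]; rewrite hs // mul0r.
Qed.

Lemma Oc_supp N N' s xi : supp N s -> (N <= N')%N -> Oc N' s xi = Oc N s xi.
Proof. by move=> hs hN; apply: functional_extensionality => i; rewrite /Oc (sum_supp _ hs hN). Qed.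
Lemma valc_supp N N' s m : supp N s -> (N <= N')%N -> valc N' s m = valc N s m.
Proof. by move=> hs hN; rewrite /valc (sum_supp _ hs hN). Qed.

Lemma Oc_QX N s xi : ZpS s -> QX xi -> QX (Oc N s xi).
Proof. move=> hs hx; apply: (@QX_sum N (fun k i => s k * Bn k xi i)) => k; apply: QXZ => //; exact: Bn_QX. Qed.

Lemma Oc_bound N s e b xi : 0 <= e -> (forall k, (k < N)%N -> v (s k) <= e) -> b != 0 -> QX xi ->
  (forall i, v (xi i) <= v b) -> forall i, v (Oc N s xi i) <= e * v b.
Proof.
move=> e0 hs b0 hx hb i; rewrite /Oc big_seq_cond; apply: vsum; first by rewrite mulr_ge0 ?v_ge0.
move=> k /andP [hk _]; rewrite mem_index_iota in hk.
apply: vM_le => //; [exact: hs | exact: Bn_norm].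
Qed.

Lemma valc_bound N s m : ZpS s -> v (valc N s m) <= 1.
Proof.
move=> hs; apply: vsum => // k _; have := vM_le (hs k) (vnat ('C(m, k))) ler01; by rewrite mulr1.
Qed.

Lemma TL N s e : 0 <= e -> (forall m, (m < N)%N -> v (valc N s m) <= e) ->
  forall k, (k < N)%N -> v (s k) <= e.
Proof.
move=> e0 hv; elim/ltn_ind => k IH hk.
have ek : valc N s k = \sum_(0 <= n < k) s n * ('C(k, n))%:R + s k.
  rewrite /valc (big_cat_nat (leq0n k) (ltnW hk)) /= [Y in _ + Y](big_ltn hk).
  rewrite binn mulr1 [Y in _ + (_ + Y)]big_nat_cond [Y in _ + (_ + Y)]big1 ?addr0 //.
  by move=> n /andP [/andP [h1 _] _]; rewrite bin_small // mulr0.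
have -> : s k = valc N s k - \sum_(0 <= n < k) s n * ('C(k, n))%:R by rewrite ek; ring.
apply: vB_le; first exact: hv.
rewrite big_seq_cond; apply: vsum => // n /andP [hn _]; rewrite mem_index_iota in hn.
rewrite -[e]mulr1; apply: vM_le => //; last exact: vnat.
apply: IH; first by case/andP: hn.
by apply: ltn_trans hk; case/andP: hn.
Qed.

Lemma Oc_add N s xi eta : QX xi -> QX eta ->
  Oc N s (fun i => xi i + eta i) = (fun i => Oc N s xi i + Oc N s eta i).
Proof.
move=> h1 h2; apply: functional_extensionality => i; rewrite /Oc -big_split /=.
by apply: eq_bigr => k _; rewrite (bopD (Bn_bop k) h1 h2) mulrDr.
Qed.

Lemma Oc_scale N s a xi : Zp_elem v a -> QX xi ->
  Oc N s (fun i => a * xi i) = (fun i => a * Oc N s xi i).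
Proof.
move=> ha h; apply: functional_extensionality => i; rewrite /Oc mulr_sumr.
by apply: eq_bigr => k _; rewrite (bopZ (Bn_bop k) ha h) mulrCA.
Qed.

Lemma binK k m : (k.+1%:R * ('C(m, k.+1))%:R : K) = (m%:R - k%:R) * ('C(m, k))%:R.
Proof.
case: (leqP k m) => hk.
  by rewrite -natrB // -!natrM mul_bin_left.
by rewrite !bin_small // ?mulr0 // ltnW.
Qed.


Lemma shift_sum L (u : nat -> K) (i : nat) (F : nat -> K) : supp L u ->
  \sum_(0 <= k < L.+1) ((k%:R - i%:R) * u k + k%:R * u k.-1) * F k
  = \sum_(0 <= k < L) u k * ((k%:R - i%:R) * F k + k.+1%:R * F k.+1).
Proof.
move=> hs.
have e1 : \sum_(0 <= k < L.+1) ((k%:R - i%:R) * u k + k%:R * u k.-1) * F k =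
  \sum_(0 <= k < L.+1) (k%:R - i%:R) * u k * F k + \sum_(0 <= k < L.+1) k%:R * u k.-1 * F k.
  by rewrite -big_split; apply: eq_bigr => k _ /=; ring.
rewrite e1 big_nat_recr //= hs // mulr0 mul0r addr0.
rewrite (big_nat_recl _ _ _ (leq0n L)) /= mul0r mul0r add0r -big_split.
by apply: eq_bigr => k _ /=; ring.
Qed.

Lemma divmulK (c a b : K) : c != 0 -> c * (a / c * b) = a * b.
Proof. by move=> h; rewrite mulrA [c * _]mulrC divfK. Qed.

Lemma ML i : forall N t, supp N t -> ZpS t -> exists L u,
  [/\ supp L u, ZpS u, (forall m, valc L u m = ('C(m, i))%:R * valc N t m) &
      forall eta, QX eta -> Bn i (Oc N t eta) = Oc L u eta].
Proof.
elim: i => [|i IH] N t hs ht.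
  exists N, t; split => //.
    by move=> m; rewrite bin0 mul1r.
  move=> eta he; apply: B0; exact: Oc_QX.
have [L [u [hsu hzu hvu hOu]]] := IH N t hs ht.
have i1 : (i.+1%:R : K) != 0 by apply: natr_neq0.
pose u' k := ((k%:R - i%:R) * u k + k%:R * u k.-1) / i.+1%:R.
have hsu' : supp L.+1 u'.
  move=> k hk; rewrite /u' (hsu k) ?(hsu k.-1) ?mulr0 ?add0r ?mul0r //.
    by case: k hk => // k; rewrite ltnS.
  exact: ltnW.
have hvu' : forall m, valc L.+1 u' m = ('C(m, i.+1))%:R * valc N t m.
  move=> m; apply: (mulfI i1).
  have e : i.+1%:R * valc L.+1 u' m = \sum_(0 <= k < L.+1) ((k%:R - i%:R) * u k + k%:R * u k.-1) * ('C(m, k))%:R.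
    rewrite /valc mulr_sumr; apply: eq_bigr => k _; by rewrite /u' divmulK.
  rewrite e shift_sum //.
  have e2 : \sum_(0 <= k < L) u k * ((k%:R - i%:R) * ('C(m, k))%:R + k.+1%:R * ('C(m, k.+1))%:R)
     = (m%:R - i%:R) * valc L u m.
    rewrite /valc mulr_sumr; apply: eq_bigr => k _; rewrite binK; ring.
  by rewrite e2 hvu mulrA [in RHS]mulrA binK.
have hzu' : ZpS u'.
  move=> k; case: (ltnP k L.+1) => hk; last by rewrite /Zp_elem hsu' // v0 ler01.
  apply: (@TL L.+1 u' 1) => // m _; rewrite hvu'.
  have := vM_le (vnat ('C(m, i.+1))) (valc_bound N m ht) ler01; by rewrite mulr1.
exists L.+1, u'; split => // eta he.
set zeta := Oc N t eta.
have hz : QX zeta by apply: Oc_QX.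
apply: functional_extensionality => x; apply: (mulfI i1).
have r1 := Brec i hz x; rewrite hOu // in r1.
have -> : i.+1%:R * Bn i.+1 zeta x = A (Oc L u eta) x - i%:R * Oc L u eta x by rewrite r1; ring.
have eA : A (Oc L u eta) = (fun x => \sum_(0 <= k < L) u k * A (Bn k eta) x).
  exact: (bop_sum HA L hzu (fun k => Bn_QX k he)).
rewrite eA.
have e : i.+1%:R * Oc L.+1 u' eta x = \sum_(0 <= k < L.+1) ((k%:R - i%:R) * u k + k%:R * u k.-1) * Bn k eta x.
  rewrite /Oc mulr_sumr; apply: eq_bigr => k _; by rewrite /u' divmulK.
rewrite e shift_sum // /Oc mulr_sumr -sumrB; apply: eq_bigr => k _.
rewrite (Brec k he x); ring.
Qed.

Lemma MP N : forall s M t, supp M t -> ZpS t -> exists L w,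
  [/\ supp L w, (forall m, valc L w m = valc N s m * valc M t m) &
      forall eta, QX eta -> Oc N s (Oc M t eta) = Oc L w eta].
Proof.
elim: N => [|N IH] s M t hs ht.
  exists 0%N, (fun _ => 0); split => //.
    move=> m; have h0 : forall F : nat -> K, \sum_(0 <= k < 0) F k = 0 by move=> F; rewrite big_geq.
    by rewrite /valc !h0 mul0r.
  move=> eta he; apply: functional_extensionality => x.
  have h0 : forall F : nat -> K, \sum_(0 <= k < 0) F k = 0 by move=> F; rewrite big_geq.
  by rewrite /Oc !h0.
have [L1 [w1 [hs1 hv1 hO1]]] := IH s M t hs ht.
have [L2 [u [hs2 _ hv2 hO2]]] := ML N hs ht.
exists (maxn L1 L2), (fun k => w1 k + s N * u k); split.
- move=> k hk; rewrite geq_max in hk; case/andP: hk => h1 h2.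
  by rewrite hs1 // hs2 // mulr0 addr0.
- move=> m.
  have -> : valc (maxn L1 L2) (fun k => w1 k + s N * u k) m
     = valc (maxn L1 L2) w1 m + s N * valc (maxn L1 L2) u m.
    by rewrite /valc mulr_sumr -big_split; apply: eq_bigr => k _ /=; ring.
  rewrite (valc_supp _ hs1 (leq_maxl _ _)) (valc_supp _ hs2 (leq_maxr _ _)) hv1 hv2.
  rewrite /valc big_nat_recr //=; ring.
- move=> eta he; apply: functional_extensionality => x.
  have -> : Oc (maxn L1 L2) (fun k => w1 k + s N * u k) eta x
     = Oc (maxn L1 L2) w1 eta x + s N * Oc (maxn L1 L2) u eta x.
    by rewrite /Oc mulr_sumr -big_split; apply: eq_bigr => k _ /=; ring.
  rewrite (Oc_supp _ hs1 (leq_maxl _ _)) (Oc_supp _ hs2 (leq_maxr _ _)) -hO1 // -hO2 //.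
  by rewrite /Oc big_nat_recr.
Qed.


Definition pi (f : K -> K) : Op K X := fun xi x => limK (fun N => Oc N (mc f) xi x).

Definition trunc N (s : nat -> K) : nat -> K := fun k => if (k < N)%N then s k else 0.
Lemma trunc_supp N s : supp N (trunc N s).
Proof. by move=> k hk; rewrite /trunc ltnNge hk. Qed.
Lemma trunc_Zp N s : ZpS s -> ZpS (trunc N s).
Proof. by move=> h k; rewrite /trunc; case: ifP => // _; rewrite /Zp_elem v0 ler01. Qed.
Lemma sum_trunc N s (F : nat -> K) : \sum_(0 <= k < N) trunc N s k * F k = \sum_(0 <= k < N) s k * F k.
Proof.
rewrite big_seq_cond [in RHS]big_seq_cond; apply: eq_bigr => k /andP [hk _].
by rewrite mem_index_iota in hk; rewrite /trunc; case/andP: hk => _ ->.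
Qed.
Lemma Oc_trunc N s xi : Oc N (trunc N s) xi = Oc N s xi.
Proof. by apply: functional_extensionality => x; rewrite /Oc sum_trunc. Qed.
Lemma valc_trunc N s m : valc N (trunc N s) m = valc N s m.
Proof. by rewrite /valc sum_trunc. Qed.

Lemma mcZ f : CZpZp v f -> ZpS (mc f).
Proof. move=> hf k; apply: mc_bound => x hx; exact: (proj1 hf). Qed.

Lemma Oc_diff N M s xi x : (N <= M)%N ->
  Oc M s xi x - Oc N s xi x = \sum_(N <= k < M) s k * Bn k xi x.
Proof. by move=> h; rewrite /Oc (big_cat_nat (leq0n N) h) /= addrC addrK. Qed.

Lemma tail_bound N M s e b xi x : 0 <= e -> (forall k, (N <= k)%N -> v (s k) <= e) ->
  b != 0 -> QX xi -> (forall i, v (xi i) <= v b) -> (N <= M)%N ->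
  v (Oc M s xi x - Oc N s xi x) <= e * v b.
Proof.
move=> e0 hs b0 hx hb hNM; rewrite Oc_diff // big_seq_cond.
apply: vsum; first by rewrite mulr_ge0 ?v_ge0.
move=> k /andP [hk _]; rewrite mem_index_iota in hk; case/andP: hk => h1 _.
apply: vM_le => //; [exact: hs | exact: Bn_norm].
Qed.

Lemma pi_cvg f xi x : CZpZp v f -> QX xi -> cvgK (fun N => Oc N (mc f) xi x) (pi f xi x).
Proof.
move=> hf hx; apply: limK_cvg => e e0.
have [b [b0 b1 hb]] := QX_bound hx.
have vb0 : 0 < v b by apply: v_gt0.
have e1 : 0 < e / (2 * v b) by rewrite divr_gt0 // mulr_gt0.
have [N hN] := mc_decay hf e1.
exists N => m n hm hn.
have key : forall m n, (N <= m)%N -> (m <= n)%N -> v (Oc n (mc f) xi x - Oc m (mc f) xi x) < e.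
  move=> m' n' hm' hmn.
  have T := @tail_bound m' n' (mc f) (e / (2 * v b)) b xi x (ltW e1)
    (fun k hk => hN k (leq_trans hm' hk)) b0 hx hb hmn.
  apply: le_lt_trans T _.
  have -> : e / (2 * v b) * v b = e / 2 by field; rewrite gt_eqF.
  lra.
case: (leqP m n) => h.
  by rewrite vBC; apply: key.
by apply: key => //; apply: ltnW.
Qed.

Lemma pi_approx f xi x N e b : CZpZp v f -> QX xi -> b != 0 -> (forall i, v (xi i) <= v b) ->
  0 <= e -> (forall k, (N <= k)%N -> v (mc f k) <= e) ->
  v (pi f xi x - Oc N (mc f) xi x) <= e * v b.
Proof.
move=> hf hx b0 hb e0 hN; apply: (cvg_le (pi_cvg x hf hx)); exists N => M hM.
exact: (@tail_bound N M (mc f) e b xi x e0 hN b0 hx hb hM).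
Qed.

Lemma pi_bound f xi x b c : CZpZp v f -> QX xi -> b != 0 -> (forall i, v (xi i) <= v b) ->
  0 <= c -> (forall k, v (mc f k) <= c) -> v (pi f xi x) <= c * v b.
Proof.
move=> hf hx b0 hb c0 hc; rewrite -[pi f xi x]subr0.
apply: (cvg_le (pi_cvg x hf hx)); exists 0%N => M _; rewrite subr0.
by apply: Oc_bound.
Qed.


Lemma pi_QX f xi : CZpZp v f -> QX xi -> QX (pi f xi).
Proof.
move=> hf hx.
have [b [b0 b1 hb]] := QX_bound hx.
have vb0 : 0 < v b by apply: v_gt0.
have vi0 : 0 < (v b)^-1 by rewrite invr_gt0.
have [N hN] := mc_decay hf vi0.
have [s hs] := Oc_QX N (mcZ hf) hx.
exists s => i hi; apply: hs.
have h := pi_approx i hf hx b0 hb (ltW vi0) hN.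
rewrite mulVf ?gt_eqF // in h.
rewrite ltNge; apply/negP => h2; move: hi; rewrite ltNge; move/negP; apply.
have -> : pi f xi i = (pi f xi i - Oc N (mc f) xi i) + Oc N (mc f) xi i by ring.
exact: vD_le.
Qed.

Lemma pi_add_xi f xi eta : CZpZp v f -> QX xi -> QX eta ->
  pi f (fun i => xi i + eta i) = (fun i => pi f xi i + pi f eta i).
Proof.
move=> hf h1 h2; apply: functional_extensionality => x.
rewrite {1}/pi; apply: limK_eq.
have e : (fun N => Oc N (mc f) (fun i => xi i + eta i) x) = (fun N => Oc N (mc f) xi x + Oc N (mc f) eta x).
  by apply: functional_extensionality => N; rewrite Oc_add.
rewrite e; apply: cvg_add; exact: pi_cvg.
Qed.

Lemma pi_scale_xi f a xi : CZpZp v f -> Zp_elem v a -> QX xi ->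
  pi f (fun i => a * xi i) = (fun i => a * pi f xi i).
Proof.
move=> hf ha h1; apply: functional_extensionality => x.
rewrite {1}/pi; apply: limK_eq.
have e : (fun N => Oc N (mc f) (fun i => a * xi i) x) = (fun N => a * Oc N (mc f) xi x).
  by apply: functional_extensionality => N; rewrite Oc_scale.
rewrite e; apply: cvg_scale; exact: pi_cvg.
Qed.

Lemma pi_add f g xi x : CZpZp v f -> CZpZp v g -> QX xi ->
  pi (fun y => f y + g y) xi x = pi f xi x + pi g xi x.
Proof.
move=> hf hg hx; rewrite {1}/pi; apply: limK_eq.
have e : (fun N => Oc N (mc (fun y => f y + g y)) xi x) = (fun N => Oc N (mc f) xi x + Oc N (mc g) xi x).
  apply: functional_extensionality => N; rewrite /Oc -big_split; apply: eq_bigr => k _ /=.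
  by rewrite mc_add mulrDl.
rewrite e; apply: cvg_add; exact: pi_cvg.
Qed.

Lemma pi_scale f a xi x : CZpZp v f -> QX xi ->
  pi (fun y => a * f y) xi x = a * pi f xi x.
Proof.
move=> hf hx; rewrite {1}/pi; apply: limK_eq.
have e : (fun N => Oc N (mc (fun y => a * f y)) xi x) = (fun N => a * Oc N (mc f) xi x).
  apply: functional_extensionality => N; rewrite /Oc mulr_sumr; apply: eq_bigr => k _ /=.
  by rewrite mc_scale mulrA.
rewrite e; apply: cvg_scale; exact: pi_cvg.
Qed.

Lemma pi_one xi x : QX xi -> pi (fun _ => 1) xi x = xi x.
Proof.
move=> hx; rewrite /pi; apply: limK_eq; apply: (cvg_ext (u := fun _ => xi x)); last exact: cvg_const.
exists 1%N => N hN; rewrite /Oc; case: N hN => // N _.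
rewrite big_nat_recl //= mc_one /= mul1r B0 // [Y in _ = _ + Y]big_nat_cond [Y in _ = _ + Y]big1 ?addr0 //.
by move=> k _; rewrite mc_one mul0r.
Qed.

Lemma pi_id xi x : QX xi -> pi (fun y => y) xi x = A xi x.
Proof.
move=> hx; rewrite /pi; apply: limK_eq; apply: (cvg_ext (u := fun _ => A xi x)); last exact: cvg_const.
exists 2%N => N hN; rewrite /Oc; case: N hN => [|[|N]] // _.
rewrite big_nat_recl //= mc_id /= mul0r add0r big_nat_recl //= mc_id /= mul1r B1 //.
rewrite [Y in _ = _ + Y]big_nat_cond [Y in _ = _ + Y]big1 ?addr0 //.
by move=> k _; rewrite mc_id mul0r.
Qed.


Lemma valc_full f M m : (m < M)%N -> valc M (mc f) m = f (m%:R).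
Proof.
move=> hm; rewrite newton_mc /valc (big_cat_nat (leq0n m.+1) hm) /=.
rewrite [Y in _ + Y]big_nat_cond [Y in _ + Y]big1 ?addr0.
  by apply: eq_bigr => k _; rewrite mulrC.
by move=> k /andP [/andP [h1 _] _]; rewrite bin_small // mulr0.
Qed.

Lemma valc_diff N M s m e : (N <= M)%N -> 0 <= e -> (forall k, (N <= k)%N -> v (s k) <= e) ->
  v (valc M s m - valc N s m) <= e.
Proof.
move=> hNM e0 hs; rewrite /valc (big_cat_nat (leq0n N) hNM) /= addrC addrK big_seq_cond.
apply: vsum => // k /andP [hk _]; rewrite mem_index_iota in hk; case/andP: hk => h1 _.
have := vM_le (hs k h1) (vnat ('C(m, k))) e0; by rewrite mulr1.
Qed.

Lemma valc_approx f N e m : 0 <= e -> (forall k, (N <= k)%N -> v (mc f k) <= e) ->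
  v (valc N (mc f) m - f (m%:R)) <= e.
Proof.
move=> e0 hs; rewrite -(@valc_full f (maxn N m.+1) m) ?leq_maxr // vBC.
apply: valc_diff => //; exact: leq_maxl.
Qed.

Lemma CZp_mul f g : CZpZp v f -> CZpZp v g -> CZpZp v (fun y => f y * g y).
Proof.
move=> [f1 f2] [g1 g2]; split; first by move=> x hx; apply: Zp_M; [exact: f1 | exact: g1].
move=> x hx e e0.
have [d1 [d10 H1]] := f2 x hx e e0; have [d2 [d20 H2]] := g2 x hx e e0.
exists (Num.min d1 d2); split; first by rewrite lt_min d10 d20.
move=> y hy hyx; rewrite lt_min in hyx; case/andP: hyx => h1 h2.
have -> : f y * g y - f x * g x = (f y - f x) * g y + f x * (g y - g x) by ring.
apply: vD_lt.
  rewrite vM; apply: le_lt_trans (H1 y hy h1); rewrite -[X in _ <= X]mulr1.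
  apply: ler_wpM2l; [exact: v_ge0 | exact: g1].
rewrite vM; apply: le_lt_trans (H2 y hy h2); rewrite -[X in _ <= X]mul1r.
apply: ler_wpM2r; [exact: v_ge0 | exact: f1].
Qed.


Lemma pi_mul f g xi x : CZpZp v f -> CZpZp v g -> QX xi ->
  pi (fun y => f y * g y) xi x = pi f (pi g xi) x.
Proof.
move=> hf hg hx.
have hfg := CZp_mul hf hg.
apply/eqP; rewrite eq_sym -subr_eq0; apply/eqP; apply: v_small_eq0 => eps eps0.
have [b [b0 b1 hb]] := QX_bound hx.
have vb0 : 0 < v b by apply: v_gt0.
have [j hj] := rpow_small (divr_gt0 eps0 vb0).
set e' := r^-1 ^+ j in hj.
have e'0 : 0 < e' by rewrite exprn_gt0 // invr_gt0 r_gt0.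
have he'b : e' * v b < eps by rewrite -ltr_pdivlMr.
have [Nf hNf] := mc_decay hf e'0.
have [Ng hNg] := mc_decay hg e'0.
have [Nfg hNfg] := mc_decay hfg e'0.
set N := maxn Nf (maxn Ng Nfg).
have hNf' : forall k, (N <= k)%N -> v (mc f k) <= e'.
  move=> k0 hk; apply: hNf; apply: leq_trans hk; exact: leq_maxl.
have hNg' : forall k, (N <= k)%N -> v (mc g k) <= e'.
  move=> k0 hk; apply: hNg; apply: leq_trans hk; exact: leq_trans (leq_maxl Ng Nfg) (leq_maxr Nf _).
have hNfg' : forall k, (N <= k)%N -> v (mc (fun y => f y * g y) k) <= e'.
  move=> k0 hk; apply: hNfg; apply: leq_trans hk; exact: leq_trans (leq_maxr Ng Nfg) (leq_maxr Nf _).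
set zeta := pi g xi.
have hz : QX zeta by apply: pi_QX.
have hzb : forall i, v (zeta i) <= v b.
  move=> i; have := pi_bound i hg hx b0 hb ler01 (mcZ hg); by rewrite mul1r.
set G := Oc N (mc g) xi.
have hG : QX G by apply: Oc_QX => //; exact: mcZ.
set del := fun i => zeta i - G i.
have hdel : QX del by apply: QXB.
set b' := (p%:R : K) ^+ j * b.
have b'0 : b' != 0 by rewrite mulf_neq0 // expf_neq0 // natr_neq0 // prime_gt0.
have vb' : v b' = e' * v b by rewrite /b' vM vpow.
have hdelb : forall i, v (del i) <= v b'.
  move=> i; rewrite vb'; exact: (pi_approx i hg hx b0 hb (ltW e'0) hNg').
have T1 : v (pi f zeta x - Oc N (mc f) zeta x) <= e' * v b.
  exact: (pi_approx x hf hz b0 hzb (ltW e'0) hNf').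
have T2 : v (Oc N (mc f) zeta x - Oc N (mc f) G x) <= e' * v b.
  have ez : zeta = (fun i => G i + del i) by apply: functional_extensionality => i; rewrite /del; ring.
  rewrite {1}ez Oc_add // addrC addKr -vb' -[v b']mul1r.
  by apply: Oc_bound => //; move=> k _; exact: (mcZ hf).
have [L [w [hsw hvw hOw]]] := MP N (mc f) (@trunc_supp N (mc g)) (@trunc_Zp N (mc g) (mcZ hg)).
have eG : Oc N (mc f) G = Oc L w xi by rewrite /G -(@Oc_trunc N (mc g) xi) hOw.
set K' := maxn L N.
have eL : Oc L w xi = Oc K' w xi by rewrite (Oc_supp _ hsw (leq_maxl _ _)).
have T4 : v (Oc K' w xi x - Oc K' (mc (fun y => f y * g y)) xi x) <= e' * v b.
  pose d k := w k - mc (fun y => f y * g y) k.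
  have -> : Oc K' w xi x - Oc K' (mc (fun y => f y * g y)) xi x = Oc K' d xi x.
    by rewrite /Oc -sumrB; apply: eq_bigr => k _; rewrite /d mulrBl.
  apply: Oc_bound => //; first exact: ltW.
  apply: TL; first exact: ltW.
  move=> m _.
  have -> : valc K' d m = valc K' w m - valc K' (mc (fun y => f y * g y)) m.
    by rewrite /valc -sumrB; apply: eq_bigr => k _; rewrite /d mulrBl.
  rewrite (valc_supp _ hsw (leq_maxl _ _)) hvw valc_trunc.
  have a1 := valc_approx m (ltW e'0) hNf'.
  have a2 := valc_approx m (ltW e'0) hNg'.
  have a3 : v (valc K' (mc (fun y => f y * g y)) m - f (m%:R) * g (m%:R)) <= e'.
    apply: (valc_approx m (ltW e'0)) => k hk; apply: hNfg'; apply: leq_trans hk; exact: leq_maxr.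
  have c1 := valc_bound N m (mcZ hf).
  have c2 : v (g (m%:R)) <= 1 by apply: (proj1 hg); exact: vnat.
  set F1 := valc N (mc f) m in a1 c1 *; set G1 := valc N (mc g) m in a2 *.
  set H1 := valc K' _ m in a3 *.
  have -> : F1 * G1 - H1 = F1 * (G1 - g m%:R) + (F1 - f m%:R) * g m%:R - (H1 - f m%:R * g m%:R) by ring.
  apply: vB_le => //; apply: vD_le.
    have := vM_le c1 a2 ler01; by rewrite mul1r.
  have := vM_le a1 c2 (ltW e'0); by rewrite mulr1.
have T5 : v (Oc K' (mc (fun y => f y * g y)) xi x - pi (fun y => f y * g y) xi x) <= e' * v b.
  rewrite vBC; apply: (pi_approx x hfg hx b0 hb (ltW e'0)) => k hk.
  apply: hNfg'; apply: leq_trans hk; exact: leq_maxr.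
have -> : pi f zeta x - pi (fun y => f y * g y) xi x =
  (pi f zeta x - Oc N (mc f) zeta x) + (Oc N (mc f) zeta x - Oc N (mc f) G x)
  + (Oc K' w xi x - Oc K' (mc (fun y => f y * g y)) xi x)
  + (Oc K' (mc (fun y => f y * g y)) xi x - pi (fun y => f y * g y) xi x).
  rewrite eG eL; ring.
apply: le_lt_trans he'b.
by apply: vD_le => //; apply: vD_le => //; apply: vD_le.
Qed.


Lemma inEP_QX P eta : inEP v P eta -> QX eta.
Proof.
move=> h; exists P => i hi; apply: contraT => hn.
by move: hi; rewrite ltNge h.
Qed.

Definition Wset (Q G : seq X) (c : R) (z0 : X -> K) : (X -> K) -> Prop :=
  fun z => [/\ QX z, inEP v Q z & forall i, i \in G -> v (z i - z0 i) < c].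

Lemma Wset_open Q G c z0 : 0 < c -> tau_open v (Wset Q G c z0).
Proof.
move=> c0; split; first by move=> z [].
move=> P z [[hz hQ hG] hP].
exists (P ++ G), (Num.min c 1); split; first by rewrite lt_min c0 ltr01.
move=> eta hPe hcl; split => //; split.
- exact: inEP_QX hPe.
- move=> j hj; case hjP: (j \in P).
    have h1 : v (eta j - z j) < 1.
      by have := hcl j; rewrite mem_cat hjP => /(_ isT); rewrite lt_min => /andP [].
    have -> : eta j = (eta j - z j) + z j by ring.
    by apply: vD_le; [exact: ltW | exact: hQ].
  by apply: hPe; rewrite hjP.
- move=> i hi.
  have h1 : v (eta i - z i) < c.
    by have := hcl i; rewrite mem_cat hi orbT => /(_ isT); rewrite lt_min => /andP [].
  have -> : eta i - z0 i = (eta i - z i) + (z i - z0 i) by ring.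
  by apply: vD_lt => //; exact: hG.
Qed.

Lemma cont_at T (P Q G : seq X) c xi : isBop v T -> 0 < c -> QX xi -> inEP v P xi -> inEP v Q (T xi) ->
  exists (F : seq X) (e : R), 0 < e /\ forall eta, inEP v P eta -> (forall i, i \in F -> v (eta i - xi i) < e) ->
    inEP v Q (T eta) /\ forall i, i \in G -> v (T eta i - T xi i) < c.
Proof.
move=> HT c0 hx hP hQ.
have Wo := Wset_open Q G (T xi) c0.
have [_ _ _ Hc] := HT.
have [_ HV] := Hc _ Wo.
have := HV P xi; case.
  split => //; split => //; split => //; first exact: bopQ.
  by move=> i _; rewrite subrr v0.
move=> F [e [e0 He]]; exists F, e; split => // eta hPe hcl.
have [[_ [_ h1 h2]] _] := He eta hPe hcl.
by split.
Qed.

Lemma combine (P : seq X) xi N (Phi : nat -> (X -> K) -> Prop) :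
  (forall k, (k < N)%N -> exists (F : seq X) (e : R), 0 < e /\ forall eta, inEP v P eta ->
     (forall i, i \in F -> v (eta i - xi i) < e) -> Phi k eta) ->
  exists (F : seq X) (e : R), 0 < e /\ forall eta, inEP v P eta ->
     (forall i, i \in F -> v (eta i - xi i) < e) -> forall k, (k < N)%N -> Phi k eta.
Proof.
elim: N => [|N IH] h.
  by exists [::], 1; split => // eta _ _ k.
have [F1 [e1 [e10 H1]]] := IH (fun k hk => h k (ltnW hk)).
have [F2 [e2 [e20 H2]]] := h N (ltnSn N).
exists (F1 ++ F2), (Num.min e1 e2); split; first by rewrite lt_min e10 e20.
move=> eta hP hcl k hk.
have c1 : forall i, i \in F1 -> v (eta i - xi i) < e1.
  move=> i hi; have := hcl i; rewrite mem_cat hi => /(_ isT); rewrite lt_min => /andP [].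
  done.
have c2 : forall i, i \in F2 -> v (eta i - xi i) < e2.
  move=> i hi; have := hcl i; rewrite mem_cat hi orbT => /(_ isT); rewrite lt_min => /andP [].
  done.
rewrite ltnS leq_eqVlt in hk; case/orP: hk => [/eqP ->|hk]; first exact: H2.
exact: H1.
Qed.


Lemma pi_cont f U : CZpZp v f -> tau_open v U -> tau_open v (fun xi => QX xi /\ U (pi f xi)).
Proof.
move=> hf [HU1 HU2]; split; first by move=> xi [].
move=> P xi [[hx hU] hP].
have [b [b0 b1 hb]] := QX_bound hx.
have vb0 : 0 < v b by apply: v_gt0.
have near_bnd : forall eta, inEP v P eta -> (forall i, i \in P -> v (eta i - xi i) < 1) ->
    forall i, v (eta i) <= v b.
  move=> eta hPe hc i; case hi: (i \in P).
    have -> : eta i = (eta i - xi i) + xi i by ring.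
    apply: vD_le => //; apply: le_trans b1; apply: ltW; exact: hc.
  apply: le_trans b1; apply: hPe; by rewrite hi.
pose Pk k := epsilon (inhabits [::]) (fun s : seq X => forall i, 1 < v (Bn k xi i) -> i \in s).
have hPk : forall k, inEP v (Pk k) (Bn k xi).
  move=> k j hj; have := epsilon_spec (inhabits [::]) (fun s : seq X => forall i, 1 < v (Bn k xi i) -> i \in s) (Bn_QX k hx).
  rewrite -/(Pk k) => h; rewrite leNgt; apply/negP => h2; move/negP: hj; apply; exact: h.
have vi0 : 0 < (v b)^-1 by rewrite invr_gt0.
have [N0 hN0] := mc_decay hf vi0.
pose P2 := flatten [seq Pk k | k <- iota 0 N0].
have inP2 : forall eta, QX eta -> (forall i, v (eta i) <= v b) ->
    (forall k, (k < N0)%N -> inEP v (Pk k) (Bn k eta)) -> inEP v P2 (pi f eta).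
  move=> eta he heb hk j hj.
  have h1 := pi_approx j hf he b0 heb (ltW vi0) hN0; rewrite mulVf ?gt_eqF // in h1.
  have -> : pi f eta j = (pi f eta j - Oc N0 (mc f) eta j) + Oc N0 (mc f) eta j by ring.
  apply: vD_le => //; rewrite /Oc big_seq_cond; apply: vsum => // k /andP [hk2 _].
  rewrite mem_index_iota in hk2.
  have hB : v (Bn k eta j) <= 1.
    apply: (hk k); first by case/andP: hk2.
    apply/negP => hjk; move/negP: hj; apply.
    apply/flatten_mapP; exists k => //; rewrite mem_iota.
    by case/andP: hk2.
  have := vM_le (mcZ hf k) hB ler01; by rewrite mulr1.
have hxP2 : inEP v P2 (pi f xi) by apply: inP2 => // k _; exact: hPk.
have [F2 [e2 [e20 H2]]] := HU2 P2 (pi f xi) (conj hU hxP2).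
have [j hj] := rpow_small (divr_gt0 e20 vb0).
set e1 := r^-1 ^+ j in hj.
have e10 : 0 < e1 by rewrite exprn_gt0 // invr_gt0 r_gt0.
have he1 : e1 * v b < e2 by rewrite -ltr_pdivlMr.
have [N1 hN1] := mc_decay hf e10.
set N2 := maxn N0 N1.
have hcomb := @combine P xi N2
  (fun k eta => inEP v (Pk k) (Bn k eta) /\ forall i, i \in F2 -> v (Bn k eta i - Bn k xi i) < e2)
  (fun k _ => @cont_at (Bn k) P (Pk k) F2 e2 xi (Bn_bop k) e20 hx hP (hPk k)).
have [F1 [e1' [e1'0 H1]]] := hcomb.
exists (P ++ F1), (Num.min 1 e1'); split; first by rewrite lt_min ltr01 e1'0.
move=> eta hPe hcl.
have c1 : forall i, i \in P -> v (eta i - xi i) < 1.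
  by move=> i hi; have := hcl i; rewrite mem_cat hi => /(_ isT); rewrite lt_min => /andP [].
have cF : forall i, i \in F1 -> v (eta i - xi i) < e1'.
  by move=> i hi; have := hcl i; rewrite mem_cat hi orbT => /(_ isT); rewrite lt_min => /andP [].
have heb := near_bnd eta hPe c1.
have he := inEP_QX hPe.
have hk := H1 eta hPe cF.
split => //; split => //.
have hetaP2 : inEP v P2 (pi f eta).
  apply: inP2 => // k hk0; apply: (proj1 (hk k _)); apply: leq_trans hk0 (leq_maxl _ _).
have close : forall i, i \in F2 -> v (pi f eta i - pi f xi i) < e2.
  move=> i hi.
  have a1 := pi_approx i hf he b0 heb (ltW e10) hN1.
  have a2 := pi_approx i hf hx b0 hb (ltW e10) hN1.
  have -> : pi f eta i - pi f xi i = (pi f eta i - Oc N1 (mc f) eta i) - (pi f xi i - Oc N1 (mc f) xi i)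
     + \sum_(0 <= k < N1) mc f k * (Bn k eta i - Bn k xi i).
    rewrite /Oc.
    have -> : \sum_(0 <= k < N1) mc f k * (Bn k eta i - Bn k xi i) =
       \sum_(0 <= k < N1) mc f k * Bn k eta i - \sum_(0 <= k < N1) mc f k * Bn k xi i.
      by rewrite -sumrB; apply: eq_bigr => k _; rewrite mulrBr.
    ring.
  apply: vD_lt; first by apply: vB_lt; apply: le_lt_trans he1.
  rewrite big_seq_cond; apply: vsum_lt => // k /andP [hk2 _]; rewrite mem_index_iota in hk2.
  rewrite vM; apply: le_lt_trans (_ : v (mc f k) * v (Bn k eta i - Bn k xi i) <= v (Bn k eta i - Bn k xi i)) _.
    rewrite -[X in _ <= X]mul1r; apply: ler_wpM2r; [exact: v_ge0 | exact: mcZ].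
  apply: (proj2 (hk k _)) => //; apply: leq_trans (leq_maxr N0 N1); by case/andP: hk2.
by have [hU' _] := H2 (pi f eta) hetaP2 close.
Qed.

Lemma pi_bop f : CZpZp v f -> isBop v (pi f).
Proof.
move=> hf; split.
- by move=> xi hx; apply: pi_QX.
- by move=> xi eta h1 h2; apply: pi_add_xi.
- by move=> a xi ha hx; apply: pi_scale_xi.
- by move=> U hU; apply: pi_cont.
Qed.


Lemma main_ops : exists pi0 : (K -> K) -> Op K X,
    [/\ forall f, CZpZp v f -> isBop v (pi0 f),
        forall f g, CZpZp v f -> CZpZp v g ->
          (forall x, Zp_elem v x -> f x = g x) -> eqOp v (pi0 f) (pi0 g),
        [/\ forall f g, CZpZp v f -> CZpZp v g ->
              eqOp v (pi0 (fun x => f x + g x)) (fun xi i => pi0 f xi i + pi0 g xi i),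
            forall f g, CZpZp v f -> CZpZp v g ->
              eqOp v (pi0 (fun x => f x * g x)) (fun xi => pi0 f (pi0 g xi)),
            forall (a : K) f, Zp_elem v a -> CZpZp v f ->
              eqOp v (pi0 (fun x => a * f x)) (fun xi i => a * pi0 f xi i) &
            eqOp v (pi0 (fun _ => 1)) (fun xi => xi)],
        eqOp v (pi0 (fun x => x)) A &
        forall f (c : R), CZpZp v f -> (forall x, Zp_elem v x -> v (f x) <= c) ->
          opnorm_le v (pi0 f) c].
Proof.
exists pi; split.
- by move=> f hf; apply: pi_bop.
- move=> f g hf hg hfg xi hx.
  have e : fN f = fN g by apply: functional_extensionality => m; apply: hfg; exact: vnat.
  by rewrite /pi /mc e.
- split.
  + by move=> f g hf hg xi hx; apply: functional_extensionality => x; apply: pi_add.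
  + by move=> f g hf hg xi hx; apply: functional_extensionality => x; apply: pi_mul.
  + by move=> a f ha hf xi hx; apply: functional_extensionality => x; apply: pi_scale.
  + by move=> xi hx; apply: functional_extensionality => x; apply: pi_one.
- by move=> xi hx; apply: functional_extensionality => x; apply: pi_id.
- move=> f c hf hc xi hx h1 i.
  have c0 : 0 <= c by apply: le_trans (hc 0 _); [exact: v_ge0 | rewrite /Zp_elem v0 ler01].
  have hb1 : forall j, v (xi j) <= v (1 : K) by move=> j; rewrite v1; exact: h1.
  have := @pi_bound f xi i 1 c hf hx (oner_neq0 K) hb1 c0 (mc_bound hc).
  by rewrite v1 mulr1.
Qed.

End Ops.
End Main.


Unset Implicit Arguments.

Theorem theorem2p21 (R : realType) (p : nat) (K : fieldType) (v : K -> R)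
  (HK : is_Qp p v) (pr_p : prime p) (X : countType) (A : Op K X)
  (HA : isBop v A) (Hnc : normal_contraction v A) :
  exists pi : (K -> K) -> Op K X,
    [/\ (* pi maps C(Z_p,Z_p) into B(Q_p(X)), and is well defined on
           C(Z_p,Z_p), i.e. depends only on the restriction to Z_p *)
        forall f, CZpZp v f -> isBop v (pi f),
        forall f g, CZpZp v f -> CZpZp v g ->
          (forall x, Zp_elem v x -> f x = g x) -> eqOp v (pi f) (pi g),
        (* Z_p-algebra homomorphism *)
        [/\ forall f g, CZpZp v f -> CZpZp v g ->
              eqOp v (pi (fun x => f x + g x)) (fun xi i => pi f xi i + pi g xi i),
            forall f g, CZpZp v f -> CZpZp v g ->
              eqOp v (pi (fun x => f x * g x)) (fun xi => pi f (pi g xi)),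
            forall (a : K) f, Zp_elem v a -> CZpZp v f ->
              eqOp v (pi (fun x => a * f x)) (fun xi i => a * pi f xi i) &
            eqOp v (pi (fun _ => 1)) (fun xi => xi)],
        (* pi_A(id) = A *)
        eqOp v (pi (fun x => x)) A &
        (* contractive: ||pi f|| <= ||f||_sup *)
        forall f (c : R), CZpZp v f -> (forall x, Zp_elem v x -> v (f x) <= c) ->
          opnorm_le v (pi f) c].
Proof.
exact: (main_ops HK pr_p HA Hnc).
Qed.
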